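(* Monitor-triggered temporal logic is strictly more expressive than LTL: for every LTL formula $\phi$ over ${\cal P}$ there is a monitor-triggered formula satisfied by exactly the same infinite traces over $2^{\cal P}$, and there is a monitor-triggered formula whose set of satisfying infinite traces is not the set of satisfying traces of any LTL formula.
   Context: Let ${\cal P}={\cal P}_{in}\cup{\cal P}_{out}$ be a set of propositions. Infinite traces $\sigma=\sigma_0\sigma_1\cdots$ have letters $\sigma_i\subseteq{\cal P}$; $\sigma_{i,j}=\sigma_i\cdots\sigma_j$ and $\sigma_{i,\infty}$ is the suffix from $i$. LTL: $\phi ::= \mathit{tt}\mid\mathit{ff}\mid e\mid\neg e\mid\phi\wedge\phi\mid\phi\vee\phi\mid X\phi\mid\phi U\phi\mid G\phi$ with the standard infinite-trace semantics. Co-safety LTL: the fragment without $G$. Finite-trace semantics of co-safety formulas on $\sigma_{i,j}$ ($j<\infty$): atoms and Boolean connectives evaluated at position $i$ as usual; $\sigma_{i,j}\vdash X\varphi$ iff $j>i$ and $\sigma_{i+1,j}\vdash\varphi$; $\sigma_{i,j}\vdash\varphi U\psi$ iff some $l\in[i,j]$ has $\sigma_{l,j}\vdash\psi$ and $\sigma_{k,j}\vdash\varphi$ for all $k\in[i,l)$. Tight satisfaction $\sigma_{i,j}\Vdash\varphi$: $\sigma_{i,j}\vdash\varphi$ and no $\sigma_{i,k}$ with $i\le k<j$ satisfies $\varphi$. Flagging monitor over $\Sigma=2^{{\cal P}_{in}}$: a tuple $D=\langle \Sigma, \mathbb{V}, \Theta, Q, \theta_0, q_0, F, \perp, \rightarrow\rangle$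 with typed variables $\mathbb{V}$ (arbitrary domains), valuations $\Theta$, finite states $Q$, initial valuation $\theta_0$, initial state $q_0$, flagging states $F\subseteq Q\setminus\{q_0\}$, sink $\perp$, and deterministic transitions $q\xrightarrow{g\mapsto a}q'$ ($q\ne\perp$) with guards $g:\Sigma\times\Theta\to\{\mathit{true},\mathit{false}\}$ and actions $a:\Sigma\times\Theta\to\Theta$. Semantics on configurations $(q,\theta)$ reading $E$: (1) if $q\notin F\cup\{\perp\}$ and a transition from $q$ has true guard, take it and set the valuation to $a(E,\theta)$; (2) if $q\notin F\cup\{\perp\}$ and no guard holds, stay; (3) $\perp$ stays; (4) a state of $F$ moves to $\perp$. On a trace over $2^{\cal P}$ the monitor reads the events $\sigma_i\cap{\cal P}_{in}$. $\sigma_{i,j}\Vdash D$ iff the run from $(q_0,\theta_0)$ on $\sigma_i,\dots,\sigma_j$ ends in a state of $F$. Monitor-triggered formulas: $\pi' ::= D{:}\phi\mid(D;\varphi)^*$ and $\pi ::= \phi\rightarrow\pi'$, with $D$ a monitor, $\phi$ LTL, $\varphi$ co-safety LTL. Semantics: $\sigma_{i,\infty}\vdash D{:}\phi$ iff for all $j\ge i$, $\sigma_{i,j}\Vdash D$ implies $\sigma_{j,\infty}\vdash\phi$. $\sigma_{i,k}\vdash D;\varphi$ iff there is $j\in[i,k]$ with $\sigma_{i,j}\Vdash D$ and $\sigma_{j,k}\Vdash\varphi$. Define restart points of $\sigma$: $0$ is one, and if $p$ is one and $\sigma_{p,k}\vdash D;\varphi$ then $k+1$ is one. $\sigma\vdash(D;\varphi)^*$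 iff for every restart point $p$ and every $i\ge p$ with $\sigma_{p,i}\Vdash D$ there is $k\ge i$ with $\sigma_{p,k}\vdash D;\varphi$. $\sigma\vdash\phi\rightarrow\pi'$ iff $\sigma\vdash\phi$ implies $\sigma\vdash\pi'$. $\sigma\vdash\pi'$ means $\sigma_{0,\infty}\vdash\pi'$. *)

(* Defs.v *)
From mathcomp Require Import all_boot.
Set Implicit Arguments. Unset Strict Implicit. Unset Printing Implicit Defensive.

Section MTL.
Variable P : finType.
Variable Pin : {set P}.

Definition trace := nat -> {set P}.

Inductive ltl : Type :=
| Ltt | Lff
| Lat (e : P) | Lnat (e : P)
| Land (f g : ltl) | Lor (f g : ltl)
| LX (f : ltl) | LU (f g : ltl) | LG (f : ltl).

(* infinite-trace semantics: sat s i f  means  s_{i,oo} |- f *)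
Fixpoint sat (s : trace) (i : nat) (f : ltl) : Prop :=
  match f with
  | Ltt => True
  | Lff => False
  | Lat e => e \in s i
  | Lnat e => e \notin s i
  | Land f g => sat s i f /\ sat s i g
  | Lor f g => sat s i f \/ sat s i g
  | LX f => sat s i.+1 f
  | LU f g => exists l, i <= l /\ sat s l g /\ forall k, i <= k < l -> sat s k f
  | LG f => forall k, i <= k -> sat s k f
  end.

Fixpoint cosafe (f : ltl) : bool :=
  match f with
  | Land f g | Lor f g | LU f g => cosafe f && cosafe g
  | LX f => cosafe f
  | LG _ => false
  | _ => true
  end.

(* finite-trace semantics on s_{i,j}; only used for co-safety formulas
   (the G case is irrelevant and set to False) *)
Fixpoint fsat (s : trace) (i j : nat) (f : ltl) : Prop :=
  match f with
  | Ltt => True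
  | Lff => False
  | Lat e => e \in s i
  | Lnat e => e \notin s i
  | Land f g => fsat s i j f /\ fsat s i j g
  | Lor f g => fsat s i j f \/ fsat s i j g
  | LX f => i < j /\ fsat s i.+1 j f
  | LU f g => exists l, i <= l <= j /\ fsat s l j g /\
                        forall k, i <= k < l -> fsat s k j f
  | LG _ => False
  end.

Definition ftight (s : trace) (i j : nat) (f : ltl) : Prop :=
  fsat s i j f /\ forall k, i <= k < j -> ~ fsat s i k f.

(* ---------------- flagging monitors over Sigma = 2^{P_in} ----------------
   Events are the sets  s_i :&: Pin  (subsets of P_in). *)
Record monitor : Type := Monitor {
  mQ : finType;
  mTheta : Type;                             (* valuations of the typed variables *)
  mtheta0 : mTheta;
  mq0 : mQ;
  mF : {set mQ};
  mbot : mQ;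
  mTr : finType;
  msrc : mTr -> mQ;
  mdst : mTr -> mQ;
  mguard : mTr -> {set P} -> mTheta -> bool;
  mact : mTr -> {set P} -> mTheta -> mTheta;
  mq0_notF : mq0 \notin mF;
  mbot_notF : mbot \notin mF;
  msrc_notbot : forall t, msrc t != mbot;
  mdet : forall t1 t2 E th, msrc t1 = msrc t2 ->
           mguard t1 E th -> mguard t2 E th -> t1 = t2
}.

Definition mstep (D : monitor) (c : mQ D * mTheta D) (E : {set P})
  : mQ D * mTheta D :=
  let (q, th) := c in
  if q \in mF D then (mbot D, th)
  else if q == mbot D then (q, th)
  else match [pick t | (msrc t == q) && mguard t E th] with
       | Some t => (mdst t, mact t E th)
       | None => (q, th)
       end.

(* configuration after reading s_i, ..., s_{i+n-1} (events s_k :&: Pin) *)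
Fixpoint mrun (D : monitor) (s : trace) (i n : nat) : mQ D * mTheta D :=
  match n with
  | 0 => (mq0 D, mtheta0 D)
  | n.+1 => mstep (mrun D s i n) (s (i + n) :&: Pin)
  end.

Definition mtight (D : monitor) (s : trace) (i j : nat) : Prop :=
  i <= j /\ (mrun D s i (j - i).+1).1 \in mF D.

Inductive mtf' : Type :=
| MTrig (D : monitor) (phi : ltl)
| MStar (D : monitor) (phi : ltl) (_ : cosafe phi).

Inductive mtf : Type :=
| MImp (phi : ltl) (p : mtf').

Definition seqsat (D : monitor) (phi : ltl) (s : trace) (i k : nat) : Prop :=
  exists j, i <= j <= k /\ mtight D s i j /\ ftight s j k phi.

Inductive restart (D : monitor) (phi : ltl) (s : trace) : nat -> Prop :=
| restart0 : restart D phi s 0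
| restartS p k : restart D phi s p -> seqsat D phi s p k -> restart D phi s k.+1.

Definition mtf'_sat (s : trace) (p : mtf') : Prop :=
  match p with
  | MTrig D phi => forall j, mtight D s 0 j -> sat s j phi
  | MStar D phi _ => forall p, restart D phi s p ->
        forall i, p <= i -> mtight D s p i ->
        exists k, i <= k /\ seqsat D phi s p k
  end.

Definition mtf_sat (s : trace) (p : mtf) : Prop :=
  match p with MImp phi p' => sat s 0 phi -> mtf'_sat s p' end.

End MTL.

(* Main.v *)
Require Import Defs.
From mathcomp Require Import all_boot zify.
Set Warnings "-notation-overridden".
Set Implicit Arguments.

Definition Dm (P : finType) : monitor P.
refine (@Monitor P (option bool) unit tt None [set Some true] (Some false) unit
  (fun _ => None) (fun _ => Some true) (fun _ _ _ => true) (fun _ _ th => th) _ _ _ _).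
- by rewrite inE.
- by rewrite inE.
- by [].
- by case; case.
Defined.

Lemma Dm_run (P : finType) (Pin : {set P}) s i n :
  (mrun Pin (Dm P) s i n).1 = (if n is 0 then None else if n is 1 then Some true else Some false).
Proof.
elim: n => [|n IH] //=.
case: (mrun Pin (Dm P) s i n) IH => q th /= ->.
case: n => [|[|n]] /=.
- case: pickP => [_ _|H]; [by rewrite inE | by have := H tt].
- by rewrite inE.
- by rewrite inE.
Qed.

Lemma Dm_tight (P : finType) (Pin : {set P}) s i j :
  mtight Pin (Dm P) s i j <-> j = i.
Proof.
rewrite /mtight Dm_run.
split.
- case=> H1; case E: (j - i) => [|k] /=; first by lia.
  by rewrite inE.
- move=> ->; rewrite subnn /= inE; split => //.
Qed.

Lemma shift_sat (P : finType) (s t : trace P) :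
  (forall k, s k.+1 = t k) -> forall f i, sat s i.+1 f <-> sat t i f.
Proof.
move=> Hst; elim => [||e|e|f IHf g IHg|f IHf g IHg|f IHf|f IHf g IHg|f IHf] i /=;
  rewrite ?Hst //.
- by move: (IHf i) (IHg i); tauto.
- by move: (IHf i) (IHg i); tauto.
- split.
  + case=> l [Hl [Hg Hf]]; case: l Hl Hg Hf => [|l] // Hl Hg Hf; exists l; split=> //; split; first by rewrite -IHg.
    move=> k Hk; rewrite -IHf; apply: Hf; lia.
  + case=> l [Hl [Hg Hf]]; exists l.+1; split=> //; split; first by rewrite IHg.
    move=> [|k] Hk; first lia. rewrite IHf; apply: Hf; lia.
- split.
  + move=> H k Hk; rewrite -IHf; apply: H; lia.
  + move=> H [|k] Hk; first lia. rewrite IHf; apply: H; lia.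
Qed.

Lemma U_exp (P : finType) (s : trace P) f g i :
  sat s i (LU f g) <-> sat s i g \/ (sat s i f /\ sat s i.+1 (LU f g)).
Proof.
rewrite /=; split.
- case=> l [Hl [Hg Hf]].
  case: (ltngtP i l) Hl => // Hil _; last by left; rewrite Hil.
  right; split; first by apply: Hf; lia.
  exists l; split=> //; split=> // k Hk; apply: Hf; lia.
- case=> [Hg|[Hf [l [Hl [Hg Hf']]]]]; first by exists i; split=> //; split=> // k; lia.
  exists l; split; first lia. split=> // k Hk.
  case: (ltngtP i k) => Hik; first (apply: Hf'; lia); first lia.
  by rewrite -Hik.
Qed.

Lemma G_exp (P : finType) (s : trace P) f i :
  sat s i (LG f) <-> sat s i f /\ sat s i.+1 (LG f).
Proof.
rewrite /=; split.
- move=> H; split; first exact: H. move=> k Hk; apply: H; lia.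
- case=> H1 H2 k Hk; case: (ltngtP i k) => Hik; first (apply: H2; lia); first lia.
  by rewrite -Hik.
Qed.

Definition w (P : finType) (p : P) (n : nat) : trace P :=
  fun k => if k == n then set0 else [set p].
Arguments w {P}.

Lemma w_shift (P : finType) (p : P) n f i :
  sat (w p n.+1) i.+1 f <-> sat (w p n) i f.
Proof. by apply: shift_sat => k. Qed.

Lemma w_step (P : finType) (p : P) f :
  exists N, forall n, N <= n -> (sat (w p n.+1) 0 f <-> sat (w p n) 0 f).
Proof.
elim: f => [||e|e|f [N1 IHf] g [N2 IHg]|f [N1 IHf] g [N2 IHg]|f [N IHf]|f [N1 IHf] g [N2 IHg]|f [N IHf]].
- by exists 0.
- by exists 0.
- by exists 1 => [[|n]].
- by exists 1 => [[|n]].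
- exists (maxn N1 N2) => n Hn /=; rewrite IHf ?IHg //; lia.
- exists (maxn N1 N2) => n Hn /=; rewrite IHf ?IHg //; lia.
- exists N.+1 => [[|n]] Hn //=. rewrite (w_shift p n.+1 f 0) (w_shift p n f 0).
  apply: IHf; lia.
- exists (maxn N1 N2) => n Hn.
  rewrite U_exp (w_shift p n (LU f g) 0) IHf ?IHg; try lia.
  rewrite [sat (w p n) 0 (LU f g)]U_exp; tauto.
- exists N => n Hn.
  rewrite G_exp (w_shift p n (LG f) 0) IHf //.
  rewrite [sat (w p n) 0 (LG f)]G_exp; tauto.
Qed.

Definition phE (P : finType) (p : P) : ltl P := Land (Lat p) (LX (Ltt _)).
Arguments phE {P}.

Lemma ftight_phE (P : finType) (p : P) s j k :
  ftight s j k (phE p) <-> p \in s j /\ k = j.+1.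
Proof.
rewrite /ftight /=; split.
- case=> [[Hp [Hjk _]] H]; split=> //.
  case: (ltngtP k j.+1) => // Hk; first lia.
  by case: (H j.+1); first lia.
- case=> Hp ->; split; first by split. move=> k' Hk' [_ [Hj _]]; lia.
Qed.

Lemma seqsat_phE (P : finType) (Pin : {set P}) (p : P) s q k :
  seqsat Pin (Dm P) (phE p) s q k <-> p \in s q /\ k = q.+1.
Proof.
rewrite /seqsat; split.
- case=> j [_ [/Dm_tight -> /ftight_phE]] //.
- move=> H; exists q; split; first by case: H => _ ->; lia.
  by split; [apply/Dm_tight | apply/ftight_phE].
Qed.

Lemma cosafe_phE (P : finType) (p : P) : cosafe (phE p). Proof. by []. Qed.
Arguments cosafe_phE {P}.

Lemma sat_star (P : finType) (Pin : {set P}) (p : P) s :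
  mtf_sat Pin s (MImp (Ltt _) (MStar (Dm P) (cosafe_phE p))) <->
  forall j, ~~ odd j -> p \in s j.
Proof.
rewrite /=; split.
- move=> H.
  have Hr : forall m, restart Pin (Dm P) (phE p) s m.*2 /\ p \in s m.*2.
    elim=> [|m [IHr IHp]].
      have R0 := restart0 Pin (Dm P) (phE p) s.
      split=> //. have [k [_ /seqsat_phE []]] := H I 0 R0 0 (leqnn 0) (proj2 (Dm_tight _ _ _ _) erefl).
      by [].
    have R : restart Pin (Dm P) (phE p) s (m.+1).*2.
      rewrite doubleS; apply: (restartS (p := m.*2)) => //; exact/seqsat_phE.
    split=> //.
    have [k [_ /seqsat_phE []]] := H I _ R _ (leqnn _) (proj2 (Dm_tight _ _ _ _) erefl).
    by [].
  move=> j Hj; rewrite -(odd_double_half j) (negbTE Hj) add0n; exact: (proj2 (Hr _)).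
- move=> H _ q Hq i Hi /Dm_tight ->; exists q.+1; split => //.
  apply/seqsat_phE; split=> //; apply: H.
  elim: Hq => // q0 k _ Hodd /seqsat_phE [_ ->] /=; by rewrite negbK.
Qed.

Lemma w_even (P : finType) (p : P) n :
  (forall j, ~~ odd j -> p \in w p n j) <-> odd n.
Proof.
have E : forall j, (p \in w p n j) = (j != n).
  by move=> j; rewrite /w; case: eqP => _; rewrite ?inE ?eqxx.
split.
- move=> H; apply/negPn/negP => Hn; have := H n Hn; by rewrite E eqxx.
- move=> Hn j Hj; rewrite E; apply/eqP => Ejn; by rewrite Ejn Hn in Hj.
Qed.

Theorem theorem2 (P : finType) (Pin : {set P}) (HP : 0 < #|P|) :
  (forall phi : ltl P, exists pi : mtf P,
      forall s : trace P, @mtf_sat P Pin s pi <-> sat s 0 phi) /\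
  (exists pi : mtf P, forall phi : ltl P,
      ~ (forall s : trace P, sat s 0 phi <-> @mtf_sat P Pin s pi)).
Proof.
split.
- move=> phi; exists (MImp (Ltt _) (MTrig (Dm P) phi)) => s /=; split.
  + move=> H; apply: (H I 0); exact/Dm_tight.
  + by move=> H _ j /Dm_tight ->.
- case/card_gt0P: HP => p _.
  exists (MImp (Ltt _) (MStar (Dm P) (cosafe_phE p))) => phi H.
  have [N HN] := w_step p phi.
  have E1 := H (w p N); have E2 := H (w p N.+1).
  rewrite sat_star w_even in E1; rewrite sat_star w_even in E2.
  have := HN N (leqnn N).
  rewrite E1 E2 /=.
  by case: (odd N); intuition.
Qed.
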